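(* There exists an edge-coloring of the complete graph on a countably infinite vertex set which contains a rainbow $k$-cycle for every integer $k \ge 3$ with $k \not\equiv 2 \pmod 4$, and contains no rainbow $k$-cycle for any $k \equiv 2 \pmod 4$. Moreover, for every $n$ there is a finite complete graph (an induced subgraph of this one, with the induced coloring) whose coloring contains a rainbow $k$-cycle for every $3 \le k \le n$ with $k \not\equiv 2 \pmod 4$, and contains no rainbow cycle of any length $\equiv 2 \pmod 4$.
   Context: A coloring is an arbitrary (not necessarily proper) assignment of colors, from an arbitrary set, to the edges of an undirected complete graph. A rainbow $k$-cycle is a cycle through $k$ distinct vertices whose $k$ edges all receive pairwise distinct colors. *)

(* Defs.v *)
From Stdlib Require Import Arith List.
Import ListNotations.

Definition rainbow_cycle {V C : Type} (P : V -> Prop) (c : V -> V -> C) (k : nat) : Prop :=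
  3 <= k /\
  exists v : nat -> V,
    (forall i, i < k -> P (v i)) /\
    (forall i j, i < k -> j < k -> i <> j -> v i <> v j) /\
    (forall i j, i < k -> j < k -> i <> j ->
       c (v i) (v ((i + 1) mod k)) <> c (v j) (v ((j + 1) mod k))).

(* Main.v *)
Require Import Defs.
From Stdlib Require Import Arith List.
From Stdlib Require Import Lia ZArith ZifyNat.

Ltac zlia := zify; Z.to_euclidean_division_equations; lia.

Definition col (x y : nat) : option (nat * nat) :=
  if Nat.eqb (x mod 2) (y mod 2) then None
  else if Nat.eqb (x mod 2) 0 then Some (x, y mod 4) else Some (y, x mod 4).

Lemma col_sym x y : col x y = col y x.
Proof.
  unfold col.
  destruct (Nat.eqb_spec (x mod 2) (y mod 2)); destruct (Nat.eqb_spec (y mod 2) (x mod 2));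
  try congruence;
  destruct (Nat.eqb_spec (x mod 2) 0); destruct (Nat.eqb_spec (y mod 2) 0); try zlia; auto.
Qed.

Lemma col_none x y : col x y = None -> x mod 2 = y mod 2.
Proof.
  unfold col. destruct (Nat.eqb_spec (x mod 2) (y mod 2)); auto.
  destruct (Nat.eqb_spec (x mod 2) 0); discriminate.
Qed.

Lemma col_none' x y : x mod 2 = y mod 2 -> col x y = None.
Proof.
  unfold col. destruct (Nat.eqb_spec (x mod 2) (y mod 2)); auto; congruence.
Qed.

Lemma col_A a b : a mod 2 = 0 -> b mod 2 = 1 -> col a b = Some (a, b mod 4).
Proof.
  intros. unfold col.
  destruct (Nat.eqb_spec (a mod 2) (b mod 2)); try zlia.
  destruct (Nat.eqb_spec (a mod 2) 0); try zlia; auto.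
Qed.

Lemma rc_mono {V C : Type} (P Q : V -> Prop) (c : V -> V -> C) k :
  (forall x, P x -> Q x) -> rainbow_cycle P c k -> rainbow_cycle Q c k.
Proof.
  intros H [Hk [v [H1 [H2 H3]]]]. split; auto. exists v. split; auto.
Qed.

Lemma exist_rc k : 3 <= k -> k mod 4 <> 2 -> rainbow_cycle (fun x => x < k) col k.
Proof.
  intros Hk Hm. split; auto. exists (fun i => i). split; [auto|]. split; [auto|].
  intros i j Hi Hj Hij.
  assert (Ei : (i + 1) mod k = i + 1 \/ (i + 1 = k /\ (i + 1) mod k = 0)).
  { destruct (Nat.eq_dec (i+1) k) as [e|e].
    - right. split; auto. rewrite e. apply Nat.mod_same. lia.
    - left. apply Nat.mod_small. lia. }
  assert (Ej : (j + 1) mod k = j + 1 \/ (j + 1 = k /\ (j + 1) mod k = 0)).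
  { destruct (Nat.eq_dec (j+1) k) as [e|e].
    - right. split; auto. rewrite e. apply Nat.mod_same. lia.
    - left. apply Nat.mod_small. lia. }
  destruct Ei as [Ei | [Ki Ei]]; destruct Ej as [Ej | [Kj Ej]]; rewrite Ei, Ej; try lia;
  unfold col;
  repeat match goal with |- context [Nat.eqb ?a ?b] => destruct (Nat.eqb_spec a b) end;
  try congruence; intro H;
  pose proof (f_equal (fun o => match o with Some (a, _) => a | None => 0 end) H) as H1;
  pose proof (f_equal (fun o => match o with Some (_, b) => b | None => 0 end) H) as H2;
  cbv beta iota in H1, H2; zlia.
Qed.

Lemma shift_neq k i d : 0 < d < k -> (i + d) mod k <> i mod k.
Proof.
  intros Hd.
  assert (Hk : k <> 0) by lia.
  rewrite Nat.add_mod by auto.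
  rewrite (Nat.mod_small d k) by lia.
  pose proof (Nat.mod_upper_bound i k Hk).
  set (r := i mod k) in *.
  destruct (Nat.lt_ge_cases (r + d) k).
  - rewrite Nat.mod_small by lia. lia.
  - replace (r + d) with ((r + d - k) + 1 * k) by lia.
    rewrite Nat.mod_add by auto. rewrite Nat.mod_small by lia. lia.
Qed.

Lemma no_rc (v : nat -> nat) k : 3 <= k -> k mod 4 = 2 ->
  (forall i j, i < k -> j < k -> i <> j ->
     col (v i) (v ((i + 1) mod k)) <> col (v j) (v ((j + 1) mod k))) -> False.
Proof.
  intros Hk Hm Hr.
  assert (Hk0 : k <> 0) by lia.
  set (g := fun j => v (j mod k)).
  assert (E : forall j, col (v (j mod k)) (v ((j mod k + 1) mod k)) = col (g j) (g (j + 1))).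
  { intros j. unfold g. rewrite Nat.add_mod_idemp_l by auto. reflexivity. }
  assert (R : forall j1 j2, j1 mod k <> j2 mod k -> col (g j1) (g (j1 + 1)) <> col (g j2) (g (j2 + 1))).
  { intros j1 j2 H. rewrite <- !E. apply Hr; auto; apply Nat.mod_upper_bound; auto. }
  assert (Per : forall j, g (j + k) = g j).
  { intros j. unfold g. replace (j + k) with (j + 1 * k) by lia. rewrite Nat.mod_add; auto. }
  assert (Cr : forall j, g j mod 2 <> g (j + 1) mod 2).
  { intros i Hi.
    assert (Hn : col (g i) (g (i + 1)) = None) by (apply col_none'; auto).
    assert (Ind : forall m, m < k -> g (i + 1 + m) mod 2 = (g (i + 1) + m) mod 2).
    { induction m as [|m IH]; intros Hmk.
      - rewrite Nat.add_0_r. zlia.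
      - specialize (IH ltac:(lia)).
        assert (Hne : col (g (i + 1 + m)) (g (i + 1 + m + 1)) <> None).
        { rewrite <- Hn. apply R. replace (i + 1 + m) with (i + (1 + m)) by lia.
          apply shift_neq. lia. }
        assert (Hc : g (i + 1 + m) mod 2 <> g (i + 1 + m + 1) mod 2).
        { intro H. apply Hne. apply col_none'. auto. }
        replace (i + 1 + S m) with (i + 1 + m + 1) by lia. zlia. }
    specialize (Ind (k - 1) ltac:(lia)).
    replace (i + 1 + (k - 1)) with (i + k) in Ind by lia.
    rewrite Per in Ind. zlia. }
  assert (Fl : forall j, g j mod 2 = 1 -> g (j + 2) mod 4 = (g j mod 4 + 2) mod 4).
  { intros j Hj.
    assert (H1 : g (j + 1) mod 2 = 0) by (specialize (Cr j); zlia).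
    assert (H2 : g (j + 2) mod 2 = 1) by (specialize (Cr (j + 1)); replace (j + 1 + 1) with (j + 2) in Cr by lia; zlia).
    assert (Hd : col (g j) (g (j + 1)) <> col (g (j + 1)) (g (j + 1 + 1))).
    { apply R. apply not_eq_sym. apply shift_neq. lia. }
    replace (j + 1 + 1) with (j + 2) in Hd by lia.
    rewrite col_sym in Hd. rewrite !col_A in Hd by auto.
    assert (g j mod 4 <> g (j + 2) mod 4) by congruence.
    zlia. }
  assert (Hs : exists s, g s mod 2 = 1).
  { destruct (Nat.eq_dec (g 0 mod 2) 1) as [e|e]. exists 0; auto.
    exists 1. specialize (Cr 0). change (0 + 1) with 1 in Cr. zlia. }
  destruct Hs as [s Hs].
  assert (Inv : forall m, g (s + 2 * m) mod 2 = 1 /\ g (s + 2 * m) mod 4 = (g s mod 4 + 2 * m) mod 4).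
  { induction m as [|m [IH1 IH2]].
    - rewrite Nat.add_0_r. split; auto. zlia.
    - pose proof (Fl _ IH1) as F.
      replace (s + 2 * m + 2) with (s + 2 * S m) in F by lia.
      split.
      + pose proof (Cr (s + 2 * m)). pose proof (Cr (s + 2 * m + 1)).
        replace (s + 2 * m + 1 + 1) with (s + 2 * S m) in * by lia. zlia.
      + rewrite F, IH2. zlia. }
  destruct (Inv (k / 2)) as [_ I2].
  replace (s + 2 * (k / 2)) with (s + k) in I2 by zlia.
  rewrite Per in I2. zlia.
Qed.

Lemma no_rc' (P : nat -> Prop) k : k mod 4 = 2 -> ~ rainbow_cycle P col k.
Proof.
  intros Hm [Hk [v [_ [_ H]]]]. exact (no_rc v k Hk Hm H).
Qed.

Theorem claim7 :
  exists (C : Type) (c : nat -> nat -> C),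
    (forall x y, c x y = c y x) /\
    (forall k, 3 <= k -> k mod 4 <> 2 -> rainbow_cycle (fun _ => True) c k) /\
    (forall k, k mod 4 = 2 -> ~ rainbow_cycle (fun _ => True) c k) /\
    (forall n, exists S : list nat,
        (forall k, 3 <= k -> k <= n -> k mod 4 <> 2 ->
           rainbow_cycle (fun x => In x S) c k) /\
        (forall k, k mod 4 = 2 -> ~ rainbow_cycle (fun x => In x S) c k)).
Proof.
  exists (option (nat * nat)), col.
  split; [exact col_sym|].
  split.
  { intros k Hk Hm. apply (rc_mono (fun x => x < k)); auto. apply exist_rc; auto. }
  split.
  { intros k Hm. apply no_rc'; auto. }
  intros n. exists (seq 0 n). split.
  - intros k Hk Hkn Hm. apply (rc_mono (fun x => x < k)).
    + intros x Hx. apply in_seq. lia.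
    + apply exist_rc; auto.
  - intros k Hm. apply no_rc'; auto.
Qed.
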